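(* Let $b,\beta_1,\beta_2,\gamma,\alpha,\lambda,\varepsilon_1,\varepsilon_2$ be positive real numbers, $\beta=\beta_1+\beta_2$, and consider the system $$s'=b-(b+\beta)s+\gamma r+(\varepsilon_1-\lambda)is+\varepsilon_2 rs,$$ $$i'=\beta_1 s-(b+\varepsilon_1+\alpha)i+\lambda is+\varepsilon_1 i^2+\varepsilon_2 ir,$$ $$r'=\beta_2 s-(b+\varepsilon_2+\gamma)r+\alpha i+\varepsilon_1 ir+\varepsilon_2 r^2.$$ Let $D=\{(s,i,r): s+i+r=1,\ s\ge0,\ i\ge0,\ r\ge0\}$ with relative interior $\overset{o}{D}$. Then this system has no source in $\overset{o}{D}$.
   Context: The plane $s+i+r=1$ is invariant for this system, so on it the dynamics is two-dimensional (equivalently given by substituting $r=1-s-i$). A source is a rest point at which all eigenvalues of the linearization of this (restricted, two-dimensional) system have positive real parts. *)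

(* Defs.v *)
From Stdlib Require Import Reals.
From Coquelicot Require Import Coquelicot.
Open Scope R_scope.

Definition ds (b beta1 beta2 gamma alpha lambda eps1 eps2 : R) (s i r : R) : R :=
  b - (b + (beta1 + beta2)) * s + gamma * r + (eps1 - lambda) * i * s + eps2 * r * s.
Definition di (b beta1 beta2 gamma alpha lambda eps1 eps2 : R) (s i r : R) : R :=
  beta1 * s - (b + eps1 + alpha) * i + lambda * i * s + eps1 * i ^ 2 + eps2 * i * r.
Definition dr (b beta1 beta2 gamma alpha lambda eps1 eps2 : R) (s i r : R) : R :=
  beta2 * s - (b + eps2 + gamma) * r + alpha * i + eps1 * i * r + eps2 * r ^ 2.

Definition F1 b beta1 beta2 gamma alpha lambda eps1 eps2 (s i : R) : R :=
  ds b beta1 beta2 gamma alpha lambda eps1 eps2 s i (1 - s - i).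
Definition F2 b beta1 beta2 gamma alpha lambda eps1 eps2 (s i : R) : R :=
  di b beta1 beta2 gamma alpha lambda eps1 eps2 s i (1 - s - i).

Definition is_eigenvalue2 (a b' c d : R) (z : C) : Prop :=
  ((RtoC a - z) * (RtoC d - z) - RtoC b' * RtoC c)%C = RtoC 0.

Definition is_source2 (f g : R -> R -> R) (x y : R) : Prop :=
  f x y = 0 /\ g x y = 0 /\
  forall z : C,
    is_eigenvalue2 (Derive (fun t => f t y) x) (Derive (fun t => f x t) y)
                   (Derive (fun t => g t y) x) (Derive (fun t => g x t) y) z ->
    0 < Re z.

(* Main.v *)
Require Import Defs.
From Stdlib Require Import Reals Lra Psatz.
From Coquelicot Require Import Coquelicot.
Open Scope R_scope.

Lemma eig_nonpos (a b' c d : R) : a + d < 0 ->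
  exists z, is_eigenvalue2 a b' c d z /\ Re z <= 0.
Proof.
  intros HT.
  destruct (Rle_or_lt 0 ((a+d)*(a+d) - 4*(a*d - b'*c))) as [HD|HD].
  - assert (Hs := sqrt_sqrt _ HD). assert (Hq := sqrt_pos ((a+d)*(a+d) - 4*(a*d - b'*c))).
    revert Hs Hq. generalize (sqrt ((a+d)*(a+d) - 4*(a*d - b'*c))). intros q Hs Hq.
    exists (RtoC ((a + d - q)/2)). split.
    + unfold is_eigenvalue2, RtoC.
      unfold Cminus, Cmult, Cplus, Copp; simpl. f_equal; nra.
    + simpl. lra.
  - assert (Hs := sqrt_sqrt (-((a+d)*(a+d) - 4*(a*d - b'*c))) ltac:(lra)).
    revert Hs. generalize (sqrt (-((a+d)*(a+d) - 4*(a*d - b'*c)))). intros q Hs.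
    exists (((a+d)/2, q / 2) : C). split.
    + unfold is_eigenvalue2, RtoC.
      unfold Cminus, Cmult, Cplus, Copp; simpl. f_equal; nra.
    + simpl. lra.
Qed.

Theorem corollary2p4 (b beta1 beta2 gamma alpha lambda eps1 eps2 : R) :
  0 < b -> 0 < beta1 -> 0 < beta2 -> 0 < gamma -> 0 < alpha -> 0 < lambda ->
  0 < eps1 -> 0 < eps2 ->
  ~ (exists s i : R,
       0 < s /\ 0 < i /\ 0 < 1 - s - i /\
       is_source2 (F1 b beta1 beta2 gamma alpha lambda eps1 eps2)
                  (F2 b beta1 beta2 gamma alpha lambda eps1 eps2) s i).
Proof.
  intros Hb Hb1 Hb2 Hg Ha Hl He1 He2 [s [i [Hs [Hi [Hr [E1 [E2 Hz]]]]]]].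
  set (r := 1 - s - i) in *.
  set (a := -(b + (beta1+beta2)) - gamma + (eps1 - lambda) * i + eps2 * (r - s)).
  set (d := -(b+eps1+alpha) + lambda * s + 2*eps1*i + eps2*(r - i)).
  assert (Da : Derive (fun t => F1 b beta1 beta2 gamma alpha lambda eps1 eps2 t i) s = a).
  { apply is_derive_unique. unfold F1, ds. auto_derive; auto. unfold a, r; ring. }
  assert (Dd : Derive (fun t => F2 b beta1 beta2 gamma alpha lambda eps1 eps2 s t) i = d).
  { apply is_derive_unique. unfold F2, di. auto_derive; auto. unfold d, r; ring. }
  rewrite -> Da, Dd in Hz.
  unfold F1, ds, F2, di in E1, E2. fold r in E1, E2.
  assert (H1 : s*a = -b - gamma*r - gamma*s - eps2*s^2).
  { unfold a. replace (r - s) with (r - s) by ring. nra. }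
  assert (H2 : i*d = -beta1*s + eps1*i^2 - eps2*i^2).
  { unfold d. nra. }
  assert (H3 : r*(eps1*i) = r*(b+eps2+gamma) - eps2*r^2 - beta2*s - alpha*i).
  { unfold r in *. nra. }
  assert (Hsir : 0 < s*i*r) by (apply Rmult_lt_0_compat; [nra|lra]).
  assert (Key : s*i*r*(a+d) = b*i*r*(s-1) - gamma*i*r^2 - beta1*s^2*r
                 - beta2*s^2*i - alpha*s*i^2).
  { transitivity (i*r*(s*a) + s*r*(i*d)). ring.
    rewrite H1, H2.
    transitivity (i*r*(-b - gamma*r - gamma*s - eps2*s^2)
       + s*r*(-beta1*s - eps2*i^2) + s*i*(r*(eps1*i))). ring.
    rewrite H3. unfold r. ring. }
  assert (HT : a + d < 0).
  { assert (s*i*r*(a+d) < 0).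
    { rewrite Key. assert (Hr' : 0 < r) by exact Hr.
      assert (0 < i*r) by (apply Rmult_lt_0_compat; lra).
      assert (s < 1) by (assert (0 < 1 - s - i) by exact Hr; lra).
      assert (0 < b*i*r) by (apply Rmult_lt_0_compat; [apply Rmult_lt_0_compat|]; lra).
      assert (0 <= gamma*i*r^2) by (apply Rmult_le_pos; [apply Rmult_le_pos|]; try lra; apply pow2_ge_0).
      assert (0 <= beta1*s^2*r) by (apply Rmult_le_pos; [apply Rmult_le_pos|]; try lra; apply pow2_ge_0).
      assert (0 <= beta2*s^2*i) by (apply Rmult_le_pos; [apply Rmult_le_pos|]; try lra; apply pow2_ge_0).
      assert (0 <= alpha*s*i^2) by (apply Rmult_le_pos; [apply Rmult_le_pos|]; try lra; apply pow2_ge_0).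
      nra. }
    nra. }
  destruct (eig_nonpos a (Derive (fun t => F1 b beta1 beta2 gamma alpha lambda eps1 eps2 s t) i)
              (Derive (fun t => F2 b beta1 beta2 gamma alpha lambda eps1 eps2 t i) s) d HT)
    as [z [Hz1 Hz2]].
  specialize (Hz z Hz1). lra.
Qed.
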